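(* Let $M$ be a canonical linear LV-SEM-ME satisfying Conventional faithfulness and Minimality, with mixing matrix $\mathbf W^*$. Then: (a) An mleaf variable and a measured cogent variable belong to the same ancestral ordered group if and only if the two rows of $\mathbf W^*$ corresponding to these variables have the same support. Further, for any cogent variable $V_i$ and any descendant $V_j$ of $V_i$, the support of the row of $V_i$ is a subset of the support of the row of $V_j$. (b) An unobserved variable and a cogent variable belong to the same ancestral ordered group if and only if the two columns of $\mathbf W^*$ corresponding to their exogenous noise terms have the same support. Further, for any cogent variable $V_i$ and any ancestor $V_j$ of $V_i$, the support of the column of $N_{V_i}$ is a subset of the support of the column of $N_{V_j}$.
   Context: Model. A linear LV-SEM-ME has a finite set of variables $\mathcal V$ and a set of measurements $\mathcal X$. The variables in $\mathcal V$ admit a causal order; each $V_i\in\mathcal V$ satisfies $V_i=\sum_{V_j\in Pa(V_i)} a_{ij}V_j+N_{V_i}$ with $Pa(V_i)\subseteq\mathcal V$ its direct parents and jointly independent exogenous noises. $\mathcal V$ is partitioned into $\mathcal Y$ (observed without error), $\mathcal Z$ (measured with error) and $\mathcal H$ (unobserved). Each $Z_i\in\mathcal Z$ has one measurement $X_i=Z_i+N_{X_i}$ with independent errors. The causal diagram is the DAG on $\mathcal V\cup\mathcal X$ with an edge $W_1\to W_2$ iff $W_1$ is a direct parent of $W_2$. An mleaf variable is a $Z_i\in\mathcal Z$ whose only child is $X_i$; $\mathcal Z^L$ is their set. A cogent variable is a variable of $\mathcal Z\cup\mathcal Y$ that is not mleaf; $\mathcal V^C$ is their set. The model is canonical if every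 $H\in\mathcal H$ has no parents and at least two children, and every mleaf variable has zero exogenous noise. Observability indicators record which observed coordinates are in $\mathcal Y$ and which in $\mathcal X$. Mixing matrices. $\mathbf W^*$ has rows indexed by $\mathcal Z\cup\mathcal Y$ and columns by the noises of $\mathcal H\cup\mathcal V^C$; the entry (row $V$, column $N_U$) is the total causal effect of $U$ on $V$ ($1$ if $U=V$). The overall mixing matrix $\mathbf W=[\mathbf W^*,\,[\mathbf I;\mathbf 0]]$ maps all independent noises (identity block = measurement errors) to $(X,Y)$. Assumptions. Conventional faithfulness: the total causal effect of any $V_i\in\mathcal V$ on any of its descendants is nonzero. Minimality: there is no other linear LV-SEM-ME with strictly fewer unobserved variables, the same observability indicators and the same mixing matrix up to permutation and scaling of columns. AOG. The ancestral ordered grouping is the partition of $\mathcal H\cup\mathcal Z^L\cup\mathcal V^C$: each cogent variable in its own group; each mleaf $Z_j$ that has a measured cogent parent $Z_i$ such that $Z_j$ has no other parents or all other parents of $Z_j$ are ancestors of $Z_i$ is put in the group of $Z_i$, otherwise in a separate group; each $H_j\in\mathcal H$ that has a cogent child $V_i$ such that all other children of $H_j$ are descendants of $V_i$ is put in the group of $V_i$, otherwise in a separate group. The groups are called ancestral ordered groups. *)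

(* Defs.v *)
From HB Require Import structures.
From mathcomp Require Import all_boot all_order all_algebra.
Set Implicit Arguments. Unset Strict Implicit. Unset Printing Implicit Defensive.
Import Order.TTheory GRing.Theory Num.Theory.
Local Open Scope ring_scope.

(* Kind of a variable of V: observed without error (Y), measured with
   error (Z), or unobserved (H). *)
Inductive vkind := KY | KZ | KH.

(* A linear LV-SEM-ME with n variables V = 'I_n and p observed coordinates.
   - par i j  : V_j is a direct parent of V_i;
   - coef i j : the coefficient a_ij (must vanish when V_j is not a parent);
   - kind     : the partition of V into Y, Z, H;
   - obs k    : the variable observed at observed coordinate k
                (Y_k itself if kind = KY, or Z_k via its measurement X_k). *)
Record LVSEMME (R : realFieldType) (n p : nat) := MkLVSEMME {
  par : rel 'I_n;
  coef : 'M[R]_n;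
  kind : 'I_n -> vkind;
  obs : 'I_p -> 'I_n }.

Section Defs.
Context {R : realFieldType} {n p : nat} (M : LVSEMME R n p).

Definition isY (v : 'I_n) : bool := if kind M v is KY then true else false.
Definition isZ (v : 'I_n) : bool := if kind M v is KZ then true else false.
Definition isH (v : 'I_n) : bool := if kind M v is KH then true else false.

Definition edge : rel 'I_n := fun u v => par M v u.
Definition desc (u v : 'I_n) : bool := connect edge u v.

Definition wf : Prop :=
  [/\ (exists rk : 'I_n -> nat, forall i j, par M i j -> (rk j < rk i)%N),
      (forall i j, ~~ par M i j -> coef M i j = 0),
      injective (obs M),
      (forall v, ~~ isH v -> exists k, obs M k = v)
    & (forall k, ~~ isH (obs M k))].

(* mleaf: Z_i whose only child (in the diagram) is X_i *)
Definition mleaf (z : 'I_n) : bool := isZ z && [forall v, ~~ par M v z].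
Definition cogent (v : 'I_n) : bool := ~~ isH v && ~~ mleaf v.

(* canonical (structural part; the zero-noise condition on mleaf variables
   is built into the mixing matrix, which has no columns for their noises) *)
Definition canonical : Prop :=
  (forall h, isH h -> forall j, ~~ par M h j) /\
  (forall h, isH h -> (1 < #|[set v | par M v h]|)%N).

(* total causal effects: teff v u = total causal effect of u on v *)
Definition teff : 'M[R]_n := invmx (1%:M - coef M).

(* variables whose noise indexes a column of W^* *)
Definition inWcol (u : 'I_n) : bool := isH u || cogent u.

(* support of the row of V in W^* (as a set of noise indices) *)
Definition rowsupp (v : 'I_n) : {set 'I_n} := [set u | inWcol u & teff v u != 0].
(* support of the column of N_U in W^* (as a set of row indices) *)
Definition colsupp (u : 'I_n) : {set 'I_n} := [set v | ~~ isH v & teff v u != 0].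

Definition conv_faithful : Prop :=
  forall i j, i != j -> desc i j -> teff j i != 0.

Definition aog_mleaf_cand (z c : 'I_n) : bool :=
  [&& isZ c, cogent c, par M z c &
      [forall q, (par M z q && (q != c)) ==> desc q c]].
Definition aog_hid_cand (h c : 'I_n) : bool :=
  [&& cogent c, par M c h &
      [forall k, (par M k h && (k != c)) ==> desc c k]].
Definition aog_rep (v : 'I_n) : 'I_n :=
  if cogent v then v
  else if mleaf v then odflt v [pick c | aog_mleaf_cand v c]
  else if isH v then odflt v [pick c | aog_hid_cand v c]
  else v.
Definition same_aog (u v : 'I_n) : bool := aog_rep u == aog_rep v.

(* Overall mixing matrix W = [W^*, [I;0]]: rows = observed coordinates,
   columns indexed by inl u (noise N_U, u ∈ H ∪ V^C) and inr z
   (measurement error N_{X_z}, z ∈ Z). *)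
Definition validcol (x : 'I_n + 'I_n) : bool :=
  match x with inl u => inWcol u | inr z => isZ z end.
Definition Wentry (k : 'I_p) (x : 'I_n + 'I_n) : R :=
  match x with
  | inl u => teff (obs M k) u
  | inr z => if obs M k == z then 1 else 0
  end.

Definition nH : nat := #|[set v | isH v]|.
End Defs.

(* M and M' have the same mixing matrix up to permutation and (nonzero)
   scaling of columns. *)
Definition same_mixing {R : realFieldType} {n n' p : nat}
  (M : LVSEMME R n p) (M' : LVSEMME R n' p) : Prop :=
  exists (f : 'I_n + 'I_n -> 'I_n' + 'I_n') (g : 'I_n' + 'I_n' -> 'I_n + 'I_n)
         (c : 'I_n + 'I_n -> R),
    (forall x, validcol M x ->
       [/\ validcol M' (f x), g (f x) = x, c x != 0 &
           forall k, Wentry M' k (f x) = c x * Wentry M k x]) /\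
    (forall y, validcol M' y -> validcol M (g y) /\ f (g y) = y).

Definition same_obs_ind {R : realFieldType} {n n' p : nat}
  (M : LVSEMME R n p) (M' : LVSEMME R n' p) : Prop :=
  forall k, isY M (obs M k) = isY M' (obs M' k).

Definition minimal {R : realFieldType} {n p : nat} (M : LVSEMME R n p) : Prop :=
  forall (n' : nat) (M' : LVSEMME R n' p),
    wf M' -> canonical M' -> same_obs_ind M M' -> same_mixing M M' ->
    ~ (nH M' < nH M)%N.

(* Main.v *)
Require Import Defs.
From mathcomp Require Import all_boot all_order all_algebra.
From mathcomp Require Import zify.
Set Implicit Arguments. Unset Strict Implicit. Unset Printing Implicit Defensive.
Import Order.TTheory GRing.Theory Num.Theory.
Local Open Scope ring_scope.

Section Aux.
Context {R : realFieldType} {n p : nat} {M : LVSEMME R n p} {rk : 'I_n -> nat}.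
Hypothesis Hrk : forall i j, par M i j -> (rk j < rk i)%N.

Lemma desc_refl u : desc M u u. Proof. exact: connect0. Qed.
Lemma desc_trans u v w : desc M u v -> desc M v w -> desc M u w.
Proof. exact: connect_trans. Qed.
Lemma desc_par u v : par M v u -> desc M u v.
Proof. move=> e; exact: (connect1 (e : edge M u v)). Qed.

Lemma path_rk u s : path (edge M) u s -> (rk u <= rk (last u s))%N.
Proof.
elim: s u => [|w s IH] u //= /andP [e pw].
exact: leq_trans (ltnW (Hrk e)) (IH _ pw).
Qed.

Lemma desc_rk u v : desc M u v -> (rk u <= rk v)%N.
Proof. by move/connectP => [s ps ->]; exact: path_rk. Qed.

Lemma desc_first u v : desc M u v -> u != v -> exists w, par M w u /\ desc M w v.
Proof.
move/connectP => [[|w s] /= ps ->]; first by rewrite eqxx.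
case/andP: ps => e ps _; exists w; split => //; apply/connectP; by exists s.
Qed.

Lemma desc_last u v : desc M u v -> u != v -> exists q, par M v q /\ desc M u q.
Proof.
move/connectP => [s ps ->]; move: ps.
elim/last_ind: s => [|s w _] /=; first by rewrite eqxx.
rewrite rcons_path last_rcons => /andP [ps e] _.
exists (last u s); split => //; apply/connectP; by exists s.
Qed.

Lemma desc_antisym u v : desc M u v -> desc M v u -> u = v.
Proof.
move=> h1 h2; case: (eqVneq u v) => // ne.
have [w [e d]] := desc_first h1 ne.
have := Hrk e; have := desc_rk d; have := desc_rk h2. lia.
Qed.

Lemma rk_ind (P : 'I_n -> Prop) :
  (forall u, (forall w, par M w u -> P w) -> P u) -> forall u, P u.
Proof.
move=> H. set N := (\max_u rk u)%N.
suff S : forall m u, (N - rk u <= m)%N -> P u by move=> u; exact: (S _ u (leqnn _)).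
elim=> [|m IH] u hu; apply: H => w e; have := Hrk e;
  have : (rk w <= N)%N by exact: (leq_bigmax (F := rk) w).
- lia.
- move=> h1 h2; apply: IH; lia.
Qed.

Hypothesis Hcoef : forall i j, ~~ par M i j -> coef M i j = 0.

Lemma unit_IA : (1%:M - coef M) \in unitmx.
Proof.
rewrite -row_free_unit -kermx_eq0; apply/eqP/row_matrixP => i; rewrite row0.
set x := row i _.
have hx : x *m (1%:M - coef M) = 0 by apply/sub_kermxP; exact: row_sub.
have hx' : x = x *m coef M.
  by apply/eqP; rewrite -subr_eq0; move: hx; rewrite mulmxBr mulmx1 => ->.
clearbody x; apply/rowP => u; rewrite [RHS]mxE; move: u; apply: rk_ind => u IH.
rewrite hx' mxE big1 // => w _.
case: (boolP (par M w u)) => e; first by rewrite IH // mul0r.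
by rewrite Hcoef // mulr0.
Qed.

Lemma teff_eq : teff M = 1%:M + teff M *m coef M.
Proof.
have : teff M *m (1%:M - coef M) = 1%:M by rewrite /teff mulVmx // unit_IA.
rewrite mulmxBr mulmx1 => /eqP; rewrite subr_eq => /eqP.
by rewrite addrC.
Qed.

Lemma teff_entry v u :
  teff M v u = (if v == u then 1 else 0) + \sum_w teff M v w * coef M w u.
Proof. by rewrite {1}teff_eq !mxE mulrb. Qed.

Lemma teff_desc v u : teff M v u != 0 -> desc M u v.
Proof.
move: u; apply: rk_ind => u IH.
rewrite teff_entry; case: (eqVneq v u) => [-> _|ne]; first exact: desc_refl.
rewrite add0r => nz.
case: (pickP (fun w => teff M v w * coef M w u != 0)) => [w hw|none]; last first.
  move: nz; rewrite big1 ?eqxx // => w _; apply/eqP; exact: (negbFE (none w)).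
move: hw; rewrite mulf_eq0 negb_or => /andP [h1 h2].
case: (boolP (par M w u)) => e; last by rewrite Hcoef ?eqxx in h2.
exact: desc_trans (desc_par e) (IH w e h1).
Qed.

Lemma teff_diag v : teff M v v = 1.
Proof.
rewrite teff_entry eqxx big1 ?addr0 // => w _.
case: (boolP (par M w v)) => e; last by rewrite Hcoef // mulr0.
case: (eqVneq (teff M v w) 0) => [->|nz]; first by rewrite mul0r.
have := desc_rk (teff_desc nz); have := Hrk e; lia.
Qed.

Hypothesis Hf : conv_faithful M.

Lemma teff_nz u v : (teff M v u != 0) = desc M u v.
Proof.
apply/idP/idP; first exact: teff_desc.
move=> d; case: (eqVneq u v) => [->|ne]; first by rewrite teff_diag oner_neq0.
exact: Hf.
Qed.

Lemma rowsuppE v : rowsupp M v = [set u | inWcol M u & desc M u v].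
Proof. by apply/setP => u; rewrite !inE teff_nz. Qed.
Lemma colsuppE u : colsupp M u = [set v | ~~ isH M v & desc M u v].
Proof. by apply/setP => v; rewrite !inE teff_nz. Qed.
End Aux.

Theorem proposition4 (R : realFieldType) (n p : nat) (M : LVSEMME R n p) :
  wf M -> canonical M -> conv_faithful M -> minimal M ->
  [/\ (forall z c, mleaf M z -> isZ M c -> cogent M c ->
         (same_aog M z c <-> rowsupp M z = rowsupp M c)),
      (forall i j, cogent M i -> desc M i j ->
         rowsupp M i \subset rowsupp M j),
      (forall h c, isH M h -> cogent M c ->
         (same_aog M h c <-> colsupp M h = colsupp M c))
    & (forall i j, cogent M i -> desc M j i ->
         colsupp M i \subset colsupp M j)].
Proof.
move=> [[rk Hrk] Hcoef _ _ _] [Hcan _] Hf _.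
have rowE := rowsuppE Hrk Hcoef Hf. have colE := colsuppE Hrk Hcoef Hf.
have anti := desc_antisym Hrk.
split.
- move=> z c mz zc cc.
  have ncz : ~~ cogent M z by rewrite /cogent mz andbF.
  have zWc : ~~ inWcol M z.
    rewrite /inWcol negb_or ncz andbT.
    by move: mz; rewrite /mleaf /isZ /isH; case: (kind M z).
  have cWc : inWcol M c by rewrite /inWcol cc orbT.
  have zc_ne : z != c by apply: contraNneq ncz => ->.
  have Hrep : aog_rep M z = odflt z [pick c' | aog_mleaf_cand M z c'].
    by rewrite /aog_rep (negbTE ncz) mz.
  have Hrepc : aog_rep M c = c by rewrite /aog_rep cc.
  rewrite /same_aog Hrep Hrepc !rowE.
  split.
  + case: pickP => [c' hc' /= /eqP Ec|_ /= /eqP E]; last by rewrite E eqxx in zc_ne.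
    subst c'; move: hc' => /and4P [_ _ pzc /forallP hq].
    apply/setP => u; rewrite !inE.
    apply/andP/andP => [[uW du]|[uW du]]; split => //.
    * have une : u != z by apply: contraNneq zWc => <-.
      have [q [pq dq]] := desc_last du une.
      case: (eqVneq q c) => [<-//|qc].
      have := hq q; rewrite pq qc /= => dqc; exact: desc_trans dq dqc.
    * exact: desc_trans du (desc_par pzc).
  + move=> E.
    have dcz : desc M c z.
      have : c \in [set u | inWcol M u & desc M u c] by rewrite inE cWc desc_refl.
      by rewrite -E inE => /andP[].
    have hq : forall q, par M z q -> desc M q c.
      move=> q pq; have : q \in [set u | inWcol M u & desc M u z].
        rewrite inE (desc_par pq) andbT /inWcol.
        case: (boolP (isH M q)) => //= nh.
        rewrite /cogent nh /= /mleaf negb_and; apply/orP; right.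
        by apply/negP => /forallP /(_ z); rewrite pq.
      by rewrite E inE => /andP[].
    have czne : c != z by rewrite eq_sym.
    have [q [pq dq]] := desc_last dcz czne.
    have qc : q = c by apply: anti (hq q pq) dq.
    have cand : aog_mleaf_cand M z c.
      rewrite /aog_mleaf_cand zc cc /=; apply/andP; split; first by rewrite -qc.
      apply/forallP => q'; apply/implyP => /andP [pq' _]; exact: hq.
    case: pickP => [c' hc'|/(_ c)]; last by rewrite cand.
    apply/eqP; move: hc' cand => /and4P [_ _ p1 /forallP h1] /and4P [_ _ p2 /forallP h2].
    case: (eqVneq c' c) => // ne.
    apply: anti.
    * by apply: (implyP (h2 c')); rewrite p1 ne.
    * by apply: (implyP (h1 c)); rewrite p2 eq_sym ne.
- move=> i j _ dij; rewrite !rowE; apply/subsetP => u; rewrite !inE => /andP [uW dui].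
  by rewrite uW (desc_trans dui dij).
- move=> h c hh cc.
  have nch : ~~ cogent M h by rewrite /cogent hh.
  have nmh : ~~ mleaf M h by move: hh; rewrite /mleaf /isZ /isH; case: (kind M h).
  have Hrep : aog_rep M h = odflt h [pick c' | aog_hid_cand M h c'].
    by rewrite /aog_rep (negbTE nch) (negbTE nmh) hh.
  have Hrepc : aog_rep M c = c by rewrite /aog_rep cc.
  have nhc : ~~ isH M c by case/andP: cc.
  have hc_ne : h != c by apply: contraNneq nhc => <-.
  rewrite /same_aog Hrep Hrepc !colE.
  split.
  + case: pickP => [c' hc' /= /eqP Ec|_ /= /eqP E]; last by rewrite E eqxx in hc_ne.
    subst c'; move: hc' => /and3P [_ pch /forallP hk].
    apply/setP => v; rewrite !inE.
    apply/andP/andP => [[nv dv]|[nv dv]]; split => //.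
    * have vne : h != v by apply: contraNneq nv => <-.
      have [w [pw dw]] := desc_first dv vne.
      case: (eqVneq w c) => [wc|wc]; first by rewrite -wc.
      have := hk w; rewrite pw wc /= => dcw; exact: desc_trans dcw dw.
    * exact: desc_trans (desc_par pch) dv.
  + move=> E.
    have hk : forall k, par M k h -> desc M c k.
      move=> k pk; have : k \in [set v | ~~ isH M v & desc M h v].
        rewrite inE (desc_par pk) andbT; apply/negP => hk'.
        by have := Hcan k hk' h; rewrite pk.
      by rewrite E inE => /andP[].
    have dhc : desc M h c.
      have : c \in [set v | ~~ isH M v & desc M c v] by rewrite inE nhc desc_refl.
      by rewrite -E inE => /andP[].
    have [w [pw dw]] := desc_first dhc hc_ne.
    have wc : w = c by apply: anti dw (hk w pw).
    have cand : aog_hid_cand M h c.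
      apply/and3P; split => //; first by rewrite -wc.
      apply/forallP => k; apply/implyP => /andP [pk _]; exact: hk.
    case: pickP => [c' hc'|/(_ c)]; last by rewrite cand.
    apply/eqP; move: hc' cand => /and3P [_ p1 /forallP h1] /and3P [_ p2 /forallP h2].
    case: (eqVneq c' c) => // ne.
    apply: anti.
    * by apply: (implyP (h1 c)); rewrite p2 eq_sym ne.
    * by apply: (implyP (h2 c')); rewrite p1 ne.
- move=> i j _ dji; rewrite !colE; apply/subsetP => v; rewrite !inE => /andP [nv div].
  by rewrite nv (desc_trans dji div).
Qed.
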